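(* Let $k, s\in \mathbb{N}$ and let $T$ be a $ks$-linked tournament. Let $(x_1,y_1), \dots, (x_k,y_k)$ be ordered pairs of (not necessarily distinct) vertices of $T$. Then there exist distinct internally vertex-disjoint paths $P_1, \dots, P_k$ such that for all $i\in \{1,\dots, k\}$, $P_i$ is a directed path from $x_i$ to $y_i$ with $\{x_1,\dots, x_k, y_1, \dots, y_k\}\cap V(P_i)=\{x_i, y_i\}$, and such that $|\mathrm{Int}(P_1)\cup \dots \cup \mathrm{Int}(P_k)|\leq |V(T)|/s$.
   Context: A tournament is an orientation of a complete graph. A tournament $T$ is $k$-linked if $|V(T)|\geq 2k$ and whenever $x_1,\dots, x_k, y_1, \dots, y_k$ are $2k$ distinct vertices of $T$ there exist vertex-disjoint directed paths $P_1,\dots, P_k$ such that $P_i$ is a directed path from $x_i$ to $y_i$ for each $i$. For a directed path $P=x_1\dots x_\ell$, $\mathrm{Int}(P)=\{x_1,\dots,x_\ell\}\setminus\{x_1,x_\ell\}$ is its set of interior vertices. *)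

(* Defs.v *)
From mathcomp Require Import all_boot.
Set Implicit Arguments. Unset Strict Implicit. Unset Printing Implicit Defensive.

Definition tournament (V : finType) (T : rel V) : Prop :=
  (forall v, ~~ T v v) /\ (forall u v, u != v -> T u v != T v u).

Definition dipath (V : finType) (T : rel V) (x y : V) (P : seq V) : bool :=
  match P with
  | [::] => false
  | a :: p => [&& a == x, path T a p, last a p == y & uniq P]
  end.

Definition interior (V : finType) (P : seq V) : {set V} :=
  match P with
  | [::] => set0
  | a :: p => [set v in behead (belast a p)]
  end.

Definition linked (V : finType) (T : rel V) (k : nat) : Prop :=
  2 * k <= #|V| /\
  forall x y : 'I_k -> V,
    injective x -> injective y -> (forall i j, x i != y j) ->
    exists P : 'I_k -> seq V,
      (forall i, dipath T (x i) (y i) (P i)) /\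
      (forall i j, i != j -> [disjoint P i & P j]).

(* Main.v *)
Require Import Defs.
From mathcomp Require Import all_boot zify.
Set Implicit Arguments. Unset Strict Implicit. Unset Printing Implicit Defensive.

Section Gen.
Variables (V : finType) (T : rel V).

Lemma dipath_head x y P : dipath T x y P -> x \in P.
Proof. by case: P => // a p /and4P[/eqP-> _ _ _]; rewrite mem_head. Qed.

Lemma dipath_last x y P : dipath T x y P -> y \in P.
Proof. by case: P => // a p /and4P[_ _ /eqP<- _]; apply: mem_last. Qed.

Lemma dipath_uniq x y P : dipath T x y P -> uniq P.
Proof. by case: P => // a p /and4P[]. Qed.

Lemma dipath_headE x y x' y' P : dipath T x y P -> dipath T x' y' P -> x = x'.
Proof. by case: P => // a p /and4P[/eqP<- _ _ _] /and4P[/eqP<- _ _ _]. Qed.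

Lemma interior_sub x y P v : dipath T x y P -> v \in interior P ->
  [/\ v \in P, v != x & v != y].
Proof.
case: P => // a p /and4P[/eqP<- _ /eqP<- U].
case/lastP: p U => [|q z] U; rewrite /interior ?inE //.
rewrite belast_rcons /= last_rcons => vq.
move: U; rewrite cons_uniq rcons_uniq mem_rcons inE negb_or => /and3P[/andP[az aq] zq _].
rewrite mem_rcons inE vq !orbT; split => //.
  by apply/eqP => va; rewrite -va vq in aq.
by apply/eqP => vz; rewrite -vz vq in zq.
Qed.

Definition ext (X Y a b : V) (R : seq V) :=
  (if a == X then [::] else [:: X]) ++ R ++ (if b == Y then [::] else [:: Y]).

Lemma mem_ext X Y a b R v : v \in ext X Y a b R -> [|| v \in R, v == X | v == Y].
Proof.
rewrite /ext !mem_cat => /or3P[].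
- by case: ifP => _; rewrite ?inE // => ->; rewrite orbT.
- by move=> ->.
- by case: ifP => _; rewrite ?inE // => ->; rewrite !orbT.
Qed.

Lemma R_sub_ext X Y a b R v : v \in R -> v \in ext X Y a b R.
Proof. by move=> vR; rewrite /ext !mem_cat vR orbT. Qed.

Lemma dipath_ext X Y a b R : dipath T a b R -> X != Y ->
  (a != X -> T X a && (X \notin R)) -> (b != Y -> T b Y && (Y \notin R)) ->
  dipath T X Y (ext X Y a b R).
Proof.
case: R => // r rr /and4P[/eqP-> Hp /eqP Hl Hu] XY HA HB.
rewrite /ext.
case: (eqVneq a X) HA => [aX _|aX /(_ isT)/andP[TXa XR]];
case: (eqVneq b Y) HB => [bY _|bY /(_ isT)/andP[TbY YR]] /=.
- rewrite !cats0 -aX eqxx Hp Hl bY eqxx /=; exact: Hu.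
- rewrite -aX eqxx cat_path Hp /= Hl TbY last_cat /= eqxx /=.
  move: Hu YR; rewrite cat_uniq /= !mem_cat !inE negb_or [Y == a]eq_sym.
  by case: (a \in rr); case: (uniq rr); case: (Y \in rr); case: (a == Y).
- rewrite !cats0 eqxx TXa Hp Hl bY eqxx /= XR; exact: Hu.
- rewrite eqxx TXa /= cat_path Hp /= Hl TbY /= last_cat /= eqxx /=.
  move: Hu YR XR XY; rewrite cat_uniq /= !mem_cat !inE !negb_or [Y == a]eq_sym mem_cat !inE negb_or.
  by case: (a \in rr); case: (uniq rr); case: (Y \in rr); case: (a == Y); case: (X \in rr); case: (X == a); case: (X == Y).
Qed.

End Gen.


Section Link.
Variables (V : finType) (T : rel V) (K : nat).
Hypothesis HL : linked T K.

Lemma linked_fun (f : nat -> V) :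
  (forall l l', l < 2 * K -> l' < 2 * K -> f l = f l' -> l = l') ->
  exists R : 'I_K -> seq V,
    (forall j : 'I_K, dipath T (f j) (f (K + j)) (R j)) /\
    (forall i j, i != j -> [disjoint R i & R j]).
Proof.
move=> finj; case: HL => _ /(_ (fun j : 'I_K => f j) (fun j : 'I_K => f (K + j))).
case.
- move=> i j E; apply/val_inj => /=; have := ltn_ord i; have := ltn_ord j.
  move=> ? ?; apply: (finj _ _ _ _ E); lia.
- move=> i j E; apply/val_inj => /=; have := ltn_ord i; have := ltn_ord j.
  move=> ? ?; have := finj (K + i) (K + j) ltac:(lia) ltac:(lia) E; lia.
- move=> i j; apply/eqP => E; have := ltn_ord i; have := ltn_ord j.
  move=> ? ?; have := finj i (K + j) ltac:(lia) ltac:(lia) E; lia.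
by move=> R [H1 H2]; exists R.
Qed.

Lemma own (f : nat -> V) (R : 'I_K -> seq V) :
  (forall j : 'I_K, dipath T (f j) (f (K + j)) (R j)) ->
  (forall i j, i != j -> [disjoint R i & R j]) ->
  forall (j : 'I_K) l v, l < 2 * K -> f l = v -> v \in R j -> l = j \/ l = K + j.
Proof.
move=> HR1 HR2 j l v lK flv vR.
case: (ltnP l K) => lK'.
  have := dipath_head (HR1 (Ordinal lK')); rewrite /= flv => vR'.
  case: (eqVneq (Ordinal lK') j) => [<-|ne]; first by left.
  by have := HR2 _ _ ne; rewrite disjoint_has => /hasPn/(_ _ vR'); rewrite vR.
have lK2 : l - K < K by lia.
have := dipath_last (HR1 (Ordinal lK2)); rewrite /= subnKC // flv => vR'.
case: (eqVneq (Ordinal lK2) j) => [<-|ne]; first by right => /=; lia.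
by have := HR2 _ _ ne; rewrite disjoint_has => /hasPn/(_ _ vR'); rewrite vR.
Qed.
End Link.


Section Link2.
Variables (V : finType) (T : rel V) (K : nat).
Hypothesis HL : linked T K.

Lemma avoid_path u w (Y : {set V}) : u != w -> u \notin Y -> w \notin Y ->
  #|Y| + 2 <= 2 * K -> exists R, dipath T u w R /\ [disjoint R & Y].
Proof.
move=> uw uY wY cY.
have nV : 2 * K <= #|V| by case: HL.
set Z := u |: (w |: Y).
have cZ : #|Z| = #|Y| + 2.
  by rewrite /Z !cardsU1 !inE negb_or uw uY wY /=; lia.
have cZc : #|~: Z| = #|V| - (#|Y| + 2) by rewrite -cZ -(cardsC Z); lia.
set M := enum Y ++ take (2 * K - 2 - #|Y|) (enum (~: Z)).
have sM : size M = 2 * K - 2.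
  rewrite size_cat size_take -!cardE cZc; case: ifP; lia.
have uM : uniq M.
  rewrite cat_uniq enum_uniq take_uniq ?enum_uniq //= andbT.
  apply/hasPn => v /mem_take; rewrite mem_enum !inE !negb_or mem_enum.
  by case/and3P => _ _ /negbTE->.
have notM : forall v, v \in M -> (v != u) && (v != w).
  move=> v; rewrite mem_cat mem_enum => /orP[vY|/mem_take].
    by apply/andP; split; apply/eqP => E; [rewrite -E vY in uY|rewrite -E vY in wY].
  by rewrite mem_enum !inE !negb_or => /and3P[-> -> _].
have K1 : 0 < K by lia.
set L := u :: take (K - 1) M ++ w :: drop (K - 1) M.
have sL : size L = 2 * K.
  rewrite /L /= size_cat /= size_take size_drop sM; case: ifP; lia.
have uL : uniq L.
  have P : perm_eq (take (K - 1) M ++ w :: drop (K - 1) M) (w :: M).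
    by rewrite -[w :: drop _ _]cat1s perm_catCA /= cat_take_drop.
  rewrite /L cons_uniq (perm_uniq P) (perm_mem P) /= uM andbT.
  rewrite inE negb_or uw /=.
  by apply/andP; split; apply/negP => /notM; rewrite eqxx //= andbF.
set f := nth u L.
have finj : forall l l', l < 2 * K -> l' < 2 * K -> f l = f l' -> l = l'.
  by move=> l l' hl hl' /eqP; rewrite /f nth_uniq ?sL // => /eqP.
have f0 : f 0 = u by [].
have fK : f (K + 0) = w.
  have eK : K = (K - 1).+1 by lia.
  rewrite addn0 /f /L [X in nth _ _ X]eK /= nth_cat size_take sM.
  have -> : (if K - 1 < 2 * K - 2 then K - 1 else 2 * K - 2) = K - 1 by case: ifP; lia.
  by rewrite ltnn subnn.
have [R [HR1 HR2]] := linked_fun HL finj.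
set j0 : 'I_K := Ordinal K1.
exists (R j0); split; first by have := HR1 j0; rewrite /= f0 fK.
rewrite disjoint_has; apply/hasPn => v vR /=; apply/negP => vY.
have vM : v \in M by rewrite mem_cat mem_enum vY.
have vL : v \in L.
  rewrite /L inE mem_cat inE; move: vM; rewrite -{1}(cat_take_drop (K - 1) M) mem_cat.
  by case/orP => ->; rewrite ?orbT.
have lt : index v L < 2 * K by rewrite -sL index_mem.
have := own HR1 HR2 (j := j0) lt (nth_index u vL) vR.
case=> E.
  have vu : v = u by rewrite -(nth_index u vL) E.
  by move: (notM _ vM); rewrite vu eqxx.
have vw : v = w by rewrite -(nth_index u vL) E -/f fK.
by move: (notM _ vM); rewrite vw eqxx andbF.
Qed.
End Link2.


Section Nb.
Variables (V : finType) (T : rel V) (K : nat).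
Hypothesis HL : linked T K.

Lemma other_vertex (v : V) (Y : {set V}) : v \notin Y -> #|Y| + 2 <= 2 * K ->
  exists y, (y \notin Y) && (y != v).
Proof.
move=> vY cY; have nV : 2 * K <= #|V| by case: HL.
have : 0 < #|~: (v |: Y)|.
  have := cardsC (v |: Y); rewrite cardsU1 vY add1n; lia.
case/card_gt0P => y; rewrite !inE negb_or => /andP[yv yY].
by exists y; rewrite yv yY.
Qed.

Lemma out_nb (v : V) (Y : {set V}) : v \notin Y -> #|Y| + 2 <= 2 * K ->
  exists w, [/\ w \notin Y, w != v & T v w].
Proof.
move=> vY cY; have [y /andP[yY yv]] := other_vertex vY cY.
have vy : v != y by rewrite eq_sym.
have [R [HR dR]] := avoid_path HL vy vY yY cY.
case: R HR dR => // a p /and4P[/eqP-> Hp /eqP Hl Hu] dR.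
case: p Hp Hl Hu dR => [|w p] /=; first by move=> _ E; rewrite E eqxx in vy.
move=> /andP[Tvw _] _ /andP[vwp _] dR.
exists w; split => //.
- by rewrite (disjointFr dR) // !inE eqxx !orbT.
- by apply/eqP => E; rewrite E inE eqxx in vwp.
Qed.

Lemma in_nb (v : V) (Y : {set V}) : v \notin Y -> #|Y| + 2 <= 2 * K ->
  exists w, [/\ w \notin Y, w != v & T w v].
Proof.
move=> vY cY; have [y /andP[yY yv]] := other_vertex vY cY.
have [R [HR dR]] := avoid_path HL yv yY vY cY.
case: R HR dR => // a p /and4P[/eqP-> Hp /eqP Hl Hu] dR.
case/lastP: p Hp Hl Hu dR => [|q z] /=; first by move=> _ E; rewrite E eqxx in yv.
rewrite rcons_path last_rcons => /andP[_ Tz] <- Hu dR.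
have m1 : last y q \in y :: rcons q z by rewrite -rcons_cons mem_rcons inE mem_last orbT.
have m2 : last y q != z.
  apply/eqP => E; move: Hu.
  by rewrite -[(y \notin _) && _]/(uniq (rcons (y :: q) z)) rcons_uniq -E mem_last.
exists (last y q); split => //.
by rewrite (disjointFr dR).
Qed.
End Nb.


Section Greedy.
Variables (V : finType) (T : rel V) (K : nat).
Hypothesis HL : linked T K.
Variables (N : nat) (sv : nat -> V) (sd fx : nat -> bool).

Definition okf (f : nat -> V) l : Prop :=
  if fx l then f l = sv l else
    ((forall l', l' < N -> fx l' -> f l != sv l') /\
     (if sd l then T (sv l) (f l) else T (f l) (sv l))).

Lemma okf_ext f g l : g l = f l -> okf f l -> okf g l.
Proof. by rewrite /okf => ->. Qed.

Definition upd (f : nat -> V) n z := fun l => if l == n then z else f l.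

Lemma ext_step f n z :
  (forall l, l < n -> okf f l) ->
  (forall l l', l < n -> l' < n -> f l = f l' -> l = l') ->
  okf (upd f n z) n -> (forall l, l < n -> f l != z) ->
  (forall l, l < n.+1 -> okf (upd f n z) l) /\
  (forall l l', l < n.+1 -> l' < n.+1 -> upd f n z l = upd f n z l' -> l = l').
Proof.
move=> A B C D; split.
  move=> l; rewrite ltnS leq_eqVlt => /orP[/eqP->//|ln].
  by apply: (okf_ext _ (A l ln)); rewrite /upd (ltn_eqF ln).
move=> l l'; rewrite !ltnS /upd => hl hl'.
case: (eqVneq l n) => [->|ln]; case: (eqVneq l' n) => [->|ln'] //.
- have hl2 : l' < n by rewrite ltn_neqAle ln' hl'.
  by move=> E; have := D _ hl2; rewrite E eqxx.
- have hl2 : l < n by rewrite ltn_neqAle ln hl.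
  by move=> E; have := D _ hl2; rewrite E eqxx.
- apply: B; by rewrite ltn_neqAle ?ln ?ln' ?hl ?hl'.
Qed.

Lemma greedy :
  N <= 2 * K ->
  (forall l, l < N -> exists l', [/\ l' < N, fx l' & sv l' = sv l]) ->
  (forall l l', l < N -> l' < N -> fx l -> fx l' -> sv l = sv l' -> l = l') ->
  exists f : nat -> V, (forall l, l < N -> okf f l) /\
   (forall l l', l < N -> l' < N -> f l = f l' -> l = l').
Proof.
move=> NK H1 H2.
suff: forall n, n <= N -> exists f, (forall l, l < n -> okf f l) /\
   (forall l l', l < n -> l' < n -> f l = f l' -> l = l').
  by move/(_ N (leqnn N)).
elim=> [_|n IH nN]; first by exists (fun _ => sv 0); split.
have [f [A B]] := IH (ltnW nN).
case fxn: (fx n).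
  exists (upd f n (sv n)); apply: ext_step => //.
    by rewrite /okf fxn /upd eqxx.
  move=> l ln; have := A l ln; rewrite /okf.
  case fxl: (fx l).
    move=> ->; apply/eqP => E; have := H2 l n (ltn_trans ln nN) nN fxl fxn E.
    by move=> E'; rewrite E' ltnn in ln.
  by case=> /(_ n nN fxn).
set Fb := [set v | [exists l : 'I_N, fx l && (sv l == v)] || [exists l : 'I_n, f l == v]].
set n0 : 'I_N := Ordinal nN.
set g := fun l => if l < n then f l else sv l.
have sub : Fb \subset [set g (val l) | l in [set~ n0]].
  apply/subsetP => v; rewrite inE => /orP[/existsP[l /andP[fl /eqP<-]] | /existsP[l /eqP<-]].
    apply/imsetP; exists l.
      by rewrite !inE; apply/eqP => E; move: fl; rewrite E /= fxn.
    rewrite /g; case: ifP => // ln; have := A l ln; rewrite /okf fl; by move->.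
  apply/imsetP; exists (widen_ord (ltnW nN) l).
    by rewrite !inE; apply/eqP => /(congr1 val) /= E; have := ltn_ord l; rewrite E ltnn.
  by rewrite /g /= ltn_ord.
have cFb : #|Fb| <= N - 1.
  apply: (leq_trans (subset_leq_card sub)); apply: (leq_trans (leq_imset_card _ _)).
  by rewrite cardsC1 card_ord; lia.
have svF : sv n \in Fb.
  have [l' [l'N fl' El']] := H1 n nN.
  rewrite inE; apply/orP; left; apply/existsP; exists (Ordinal l'N); by rewrite /= fl' El' eqxx.
set Y := Fb :\ sv n.
have cY : #|Y| + 2 <= 2 * K.
  have := cardsD1 (sv n) Fb; rewrite svF -/Y; lia.
have svY : sv n \notin Y by rewrite !inE eqxx.
have [w [wY wsv Tw]] : exists w, [/\ w \notin Y, w != sv n &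
    if sd n then T (sv n) w else T w (sv n)].
  case: (sd n).
    by have [w [? ? ?]] := out_nb HL svY cY; exists w.
  by have [w [? ? ?]] := in_nb HL svY cY; exists w.
have wF : w \notin Fb by move: wY; rewrite !inE wsv.
exists (upd f n w); apply: ext_step => //.
  rewrite /okf fxn /upd eqxx; split => // l' l'N fl'.
  apply/eqP => E; move: wF; rewrite inE E; apply/negP/negPn/orP; left.
  by apply/existsP; exists (Ordinal l'N); rewrite /= fl' eqxx.
move=> l ln; apply/eqP => E; move: wF; rewrite inE -E; apply/negP/negPn/orP; right.
by apply/existsP; exists (Ordinal ln); rewrite /=.
Qed.
End Greedy.


Lemma sum_disj (V : finType) (m : nat) (A : 'I_m -> {set V}) :
  (forall c c', c != c' -> [disjoint A c & A c']) -> \sum_(c < m) #|A c| <= #|V|.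
Proof.
move=> H; rewrite (eq_bigr (fun c => \sum_(x in A c) 1)) => [|c _]; last by rewrite sum1_card.
rewrite -(partition_disjoint_bigcup addn (fun _ => 1) H) sum1_card; exact: max_card.
Qed.

Definition fstocc (V : finType) k (g : 'I_k -> V) (i : 'I_k) :=
  [forall i' : 'I_k, (i' < i) ==> (g i' != g i)].

Lemma fstocc_ex (V : finType) k (g : 'I_k -> V) (i : 'I_k) :
  exists i0, g i0 = g i /\ fstocc g i0.
Proof.
suff: forall n (i : 'I_k), i <= n -> exists i0, g i0 = g i /\ fstocc g i0 by apply; apply: leqnn.
elim=> [|n IH] {}i hi.
  exists i; split => //; apply/forallP => i'; apply/implyP; lia.
case: (boolP (fstocc g i)) => [fi|]; first by exists i.
case/forallPn => i'; rewrite negb_imply negbK => /andP[lt /eqP E].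
have [i0 [E0 F0]] := IH i' ltac:(lia); exists i0; split => //; by rewrite E0 E.
Qed.

Lemma fstocc_inj (V : finType) k (g : 'I_k -> V) a b :
  fstocc g a -> fstocc g b -> g a = g b -> a = b.
Proof.
move=> /forallP Fa /forallP Fb E; apply/val_inj; case: (ltngtP a b) => // h.
  by have := Fb a; rewrite h E eqxx.
by have := Fa b; rewrite h E eqxx.
Qed.

Unset Implicit Arguments. Set Strict Implicit.

Theorem proposition2p2 (V : finType) (T : rel V) (k s : nat) :
  0 < s -> tournament T -> linked T (k * s) ->
  forall x y : 'I_k -> V, (forall i, x i != y i) ->
  exists P : 'I_k -> seq V,
    [/\ injective P,
        (forall i, dipath T (x i) (y i) (P i)),
        (forall i j, i != j -> [disjoint interior (P i) & P j]),
        (forall i, [set v in P i | [exists j, (v == x j) || (v == y j)]]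
                   = [set x i; y i])
      & s * #|\bigcup_(i < k) interior (P i)| <= #|V|].
Proof.
move=> s0 _ HL x y xy.
case: (posnP k) => [k0|kpos].
  subst k; exists (fun _ => [::]); split; try by case.
  by rewrite big_ord0 cards0 muln0.
set K := k * s.
have kK : k <= K by rewrite /K leq_pmulr.
pose ix (l : nat) : 'I_k := Ordinal (ltn_pmod l kpos).
have ixK : forall j, ix (K + j) = ix j.
  by move=> j; apply/val_inj; rewrite /= /K mulnC modnMDl.
have ixs : forall l, l < k -> ix l = l :> nat by move=> l lk; rewrite /= modn_small.
pose inx (v : V) := [exists i', x i' == v].
pose sv l := if l < K then x (ix l) else y (ix l).
pose sd l := l < K.
pose fx l := if l < K then (l < k) && fstocc x (ix l)
             else [&& l - K < k, fstocc y (ix l) & ~~ inx (y (ix l))].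
have covx : forall i, exists l', [/\ l' < 2 * K, fx l' & sv l' = x i].
  move=> i; have [i0 [E0 F0]] := fstocc_ex x i.
  have i0K : i0 < K by apply: leq_trans (ltn_ord i0) kK.
  have ix0 : ix i0 = i0 by apply/val_inj; exact: ixs.
  exists i0; split; first lia.
    by rewrite /fx i0K ltn_ord ix0.
  by rewrite /sv i0K ix0.
have covy : forall i, exists l', [/\ l' < 2 * K, fx l' & sv l' = y i].
  move=> i; case: (boolP (inx (y i))) => [/existsP[i' /eqP E]|nx].
    by rewrite -E.
  have [i0 [E0 F0]] := fstocc_ex y i.
  have ix0 : ix (K + i0) = i0 by rewrite ixK; apply/val_inj; exact: ixs.
  exists (K + i0); split; first by have := ltn_ord i0; lia.
    rewrite /fx ltnNge leq_addr /= ix0 addKn ltn_ord F0 /=.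
    by rewrite E0.
  by rewrite /sv ltnNge leq_addr /= ix0.
have H1 : forall l, l < 2 * K -> exists l', [/\ l' < 2 * K, fx l' & sv l' = sv l].
  by move=> l _; rewrite {2}/sv; case: ifP.
have H2 : forall l l', l < 2 * K -> l' < 2 * K -> fx l -> fx l' -> sv l = sv l' -> l = l'.
  move=> l l' hl hl'; rewrite /fx /sv.
  case: ifP => lK; case: ifP => l'K.
  - move=> /andP[lk fl] /andP[l'k fl'] E.
    have := congr1 val (fstocc_inj fl fl' E); rewrite /= !modn_small //.
  - move=> _ /and3P[_ _ /existsP nx] E; case: nx; by exists (ix l); rewrite E.
  - move=> /and3P[_ _ /existsP nx] _ E; case: nx; by exists (ix l'); rewrite E.
  - move=> /and3P[lk fl _] /and3P[l'k fl' _] E.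
    have := congr1 val (fstocc_inj fl fl' E).
    have -> : ix l = ix (K + (l - K)) by rewrite subnKC // leqNgt lK.
    have -> : ix l' = ix (K + (l' - K)) by rewrite subnKC // leqNgt l'K.
    rewrite !ixK /= !modn_small //; move: lK l'K; lia.
have [f [okf' finj]] := @greedy V T K HL (2 * K) sv sd fx (leqnn _) H1 H2.
have [R [HR1 HR2]] := linked_fun HL finj.
pose term (v : V) := [exists i, (v == x i) || (v == y i)].
have covT : forall v, term v -> exists l, [/\ l < 2 * K, fx l & f l = v].
  move=> v /existsP[i /orP[/eqP->|/eqP->]].
    have [l [hl fl El]] := covx i; exists l; split => //.
    by have := okf' l hl; rewrite /okf fl El.
  have [l [hl fl El]] := covy i; exists l; split => //.
  by have := okf' l hl; rewrite /okf fl El.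
have fresh : forall l, l < 2 * K -> ~~ fx l -> ~~ term (f l).
  move=> l hl nfl; apply/negP => /covT [l' [hl' fl' El']].
  by have E := finj _ _ hl' hl El'; rewrite -E fl' in nfl.
have hlt1 : forall j : 'I_K, j < 2 * K by move=> j; have := ltn_ord j; lia.
have hlt2 : forall j : 'I_K, K + j < 2 * K by move=> j; have := ltn_ord j; lia.
have fxA : forall j : 'I_K, fx j -> f j = x (ix j).
  by move=> j fj; have := okf' j (hlt1 j); rewrite /okf fj => ->; rewrite /sv ltn_ord.
have fxB : forall j : 'I_K, fx (K + j) -> f (K + j) = y (ix j).
  move=> j fj; have := okf' _ (hlt2 j); rewrite /okf fj => ->.
  by rewrite /sv ltnNge leq_addr /= ixK.
have arcA : forall j : 'I_K, ~~ fx j -> T (x (ix j)) (f j).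
  move=> j fj; have := okf' j (hlt1 j); rewrite /okf (negbTE fj) => -[_].
  by rewrite /sd /sv ltn_ord.
have arcB : forall j : 'I_K, ~~ fx (K + j) -> T (f (K + j)) (y (ix j)).
  move=> j fj; have := okf' _ (hlt2 j); rewrite /okf (negbTE fj) => -[_].
  by rewrite /sd /sv ltnNge leq_addr /= ixK.
pose Q (j : 'I_K) := ext (x (ix j)) (y (ix j)) (f j) (f (K + j)) (R j).
have Qb : forall (j : 'I_K) v, v \in Q j -> term v -> (v = x (ix j)) \/ (v = y (ix j)).
  move=> j v vQ tv; case/or3P: (mem_ext vQ) => [vR|/eqP->|/eqP->]; [|by left|by right].
  have [l [hl fl El]] := covT v tv.
  case: (own HR1 HR2 hl El vR) => El'; rewrite El' in fl El.
    by left; rewrite -El fxA.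
  by right; rewrite -El fxB.
have notinA : forall j : 'I_K, f j != x (ix j) -> x (ix j) \notin R j.
  move=> j ne; apply/negP => XR.
  have tx : term (x (ix j)) by apply/existsP; exists (ix j); rewrite eqxx.
  have [l [hl fl El]] := covT (x (ix j)) tx.
  case: (own HR1 HR2 hl El XR) => El'; rewrite El' in fl El.
    by rewrite El eqxx in ne.
  by move: (xy (ix j)); rewrite -El fxB // eqxx.
have notinB : forall j : 'I_K, f (K + j) != y (ix j) -> y (ix j) \notin R j.
  move=> j ne; apply/negP => YR.
  have ty : term (y (ix j)) by apply/existsP; exists (ix j); rewrite eqxx orbT.
  have [l [hl fl El]] := covT (y (ix j)) ty.
  case: (own HR1 HR2 hl El YR) => El'; rewrite El' in fl El.
    by move: (xy (ix j)); rewrite -El fxA // eqxx.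
  by rewrite El eqxx in ne.
have Qa : forall j : 'I_K, dipath T (x (ix j)) (y (ix j)) (Q j).
  move=> j; apply: (dipath_ext (HR1 j) (xy _)).
    move=> ne; rewrite notinA // andbT; apply: arcA.
    by apply: contra ne => /fxA ->.
  move=> ne; rewrite notinB // andbT; apply: arcB.
  by apply: contra ne => /fxB ->.
have Qc : forall (j : 'I_K) v, v \in interior (Q j) -> v \in R j /\ ~~ term v.
  move=> j v /(interior_sub (Qa j)) [vQ vX vY].
  have nt : ~~ term v.
    by apply/negP => /(Qb j v vQ) [] E; [rewrite E eqxx in vX|rewrite E eqxx in vY].
  split => //; case/or3P: (mem_ext vQ) => // /eqP E; [by rewrite E eqxx in vX|by rewrite E eqxx in vY].
have slP : forall (c : 'I_s) (i : 'I_k), c * k + i < K.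
  move=> c i; have := ltn_ord c; have := ltn_ord i; rewrite /K; nia.
pose sl c i : 'I_K := Ordinal (slP c i).
have ixsl : forall c i, ix (sl c i) = i.
  by move=> c i; apply/val_inj; rewrite /= modnMDl modn_small.
have slinj : forall c c' i i', sl c i = sl c' i' -> c = c'.
  move=> c c' i i' /(congr1 val) /= E; apply/val_inj.
  have := congr1 (fun n => n %/ k) E; rewrite /= !divnMDl // !divn_small ?addn0 //.
have sumU : \sum_(c < s) #|\bigcup_(i < k) interior (Q (sl c i))| <= #|V|.
  apply: sum_disj => c c' ne; rewrite -setI_eq0; apply/eqP/setP => v; rewrite !inE.
  apply/negP => /andP[/bigcupP[i _ vi] /bigcupP[i' _ vi']].
  have [vR _] := Qc _ _ vi; have [vR' _] := Qc _ _ vi'.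
  have ne' : sl c i != sl c' i' by apply/negP => /eqP /slinj E; rewrite E eqxx in ne.
  by rewrite (disjointFr (HR2 _ _ ne') vR) in vR'.
have [cm _ Hcm] := @arg_minnP _ (Ordinal s0) xpredT
   (fun c => #|\bigcup_(i < k) interior (Q (sl c i))|) isT.
have bound : s * #|\bigcup_(i < k) interior (Q (sl cm i))| <= #|V|.
  apply: leq_trans sumU; rewrite -[s in s * _]card_ord -sum_nat_const.
  by apply: leq_sum => c _; exact: Hcm.
have key : forall a b : 'I_K, a != b -> Q a = Q b -> f a = x (ix a).
  move=> a b nab Eab.
  have fa : f a \in Q b by rewrite -Eab R_sub_ext // (dipath_head (HR1 a)).
  have t : term (f a).
    case/or3P: (mem_ext fa) => [faR|/eqP fE|/eqP fE].
    - by rewrite (disjointFr (HR2 _ _ nab) (dipath_head (HR1 a))) in faR.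
    - by apply/existsP; exists (ix b); rewrite fE eqxx.
    - by apply/existsP; exists (ix b); rewrite fE eqxx orbT.
  by apply: fxA; apply: (contraLR (fresh _ (hlt1 a))) t.
exists (fun i => Q (sl cm i)); split.
- move=> i i' E; apply/eqP/negPn/negP => ne.
  have ne' : sl cm i != sl cm i'.
    apply/negP => /eqP /(congr1 val) /= E'; move: ne; rewrite -(inj_eq val_inj) /=; lia.
  have e1 := key _ _ ne' E.
  have ne'' : sl cm i' != sl cm i by rewrite eq_sym.
  have e2 := key _ _ ne'' (esym E).
  have Qa' := Qa (sl cm i'); rewrite /= -E in Qa'.
  have hx := dipath_headE (Qa (sl cm i)) Qa'.
  have E' := finj _ _ (hlt1 _) (hlt1 _) (etrans e1 (etrans hx (esym e2))).
  by move/negP: ne'; apply; apply/eqP/val_inj.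
- by move=> i; have := Qa (sl cm i); rewrite ixsl.
- move=> i i' ne; rewrite disjoint_sym disjoint_has; apply/hasPn => v vQ; apply/negP => vI.
  have [vR nt] := Qc _ _ vI.
  have ne' : sl cm i != sl cm i'.
    apply/negP => /eqP /(congr1 val) /= E'; move: ne; rewrite -(inj_eq val_inj) /=; lia.
  case/or3P: (mem_ext vQ) => [vR'|/eqP E|/eqP E].
  + by rewrite (disjointFr (HR2 _ _ ne') vR) in vR'.
  + by move/negP: nt; apply; apply/existsP; exists (ix (sl cm i')); rewrite E eqxx.
  + by move/negP: nt; apply; apply/existsP; exists (ix (sl cm i')); rewrite E eqxx orbT.
- move=> i; apply/setP => v; rewrite !inE; apply/idP/idP.
    by case/andP=> vQ tv; case: (Qb _ _ vQ tv); rewrite ixsl => ->; rewrite eqxx ?orbT.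
  case/orP => /eqP ->; apply/andP; split.
  + by have := dipath_head (Qa (sl cm i)); rewrite ixsl.
  + by apply/existsP; exists i; rewrite eqxx.
  + by have := dipath_last (Qa (sl cm i)); rewrite ixsl.
  + by apply/existsP; exists i; rewrite eqxx orbT.
- exact: bound.
Qed.
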